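(* There exist constants $\varepsilon_0>0$ and $C_1>0$ such that the following holds. Let $r>0$, $\delta>0$, $R:=r/\delta$, $\varepsilon:=R+\tfrac12-\lfloor R+\tfrac12\rfloor$. If $\varepsilon\in[0,\varepsilon_0]$ and $R$ is sufficiently large, then $$\int_{-\pi}^{\pi}\Delta_\delta(r\cos\theta)\cos\theta\,d\theta\ \ge\ C_1\,\frac{\delta^{3/2}}{\sqrt r}.$$
   Context: For $\delta>0$, $Q_\delta(t):=\delta\lfloor t/\delta+1/2\rfloor$ and $\Delta_\delta(t):=t-Q_\delta(t)$. *)

(* Defs.v *)
From Stdlib Require Import Reals Lra.
Open Scope R_scope.

(* floor via Stdlib's Int_part (Int_part x = up x - 1 = floor x) *)
Definition floorR (x : R) : R := IZR (Int_part x).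

Definition Qd (delta t : R) : R := delta * floorR (t / delta + 1/2).

Definition Dd (delta t : R) : R := t - Qd delta t.

Definition integrand (r delta : R) (theta : R) : R :=
  Dd delta (r * cos theta) * cos theta.

(* Main.v *)
Require Import Defs.
From Stdlib Require Import Reals Lra Lia Psatz ZArith Classical FunctionalExtensionality.
Open Scope R_scope.
Definition has_int (f : R -> R) a b v := exists pr : Riemann_integrable f a b, RiemannInt pr = v.

Lemma has_int_chasles f a b c v w : has_int f a b v -> has_int f b c w -> has_int f a c (v+w).
Proof. intros [p1 e1] [p2 e2]. exists (RiemannInt_P24 p1 p2). rewrite <- (RiemannInt_P26 p1 p2), e1, e2; reflexivity. Qed.

Lemma has_int_lin f g a b l v w : has_int f a b v -> has_int g a b w ->
  has_int (fun x => f x + l * g x) a b (v + l*w).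
Proof. intros [p1 e1] [p2 e2]. exists (RiemannInt_P10 l p1 p2). rewrite (RiemannInt_P13 p1 p2), e1, e2; reflexivity. Qed.

Lemma has_int_ext f g a b v : (forall x, f x = g x) -> has_int f a b v -> has_int g a b v.
Proof. intros H; replace g with f; [auto| apply functional_extensionality; auto]. Qed.

Lemma has_int_val f a b v w : v = w -> has_int f a b v -> has_int f a b w.
Proof. intros ->; auto. Qed.

Lemma has_int_ftc f F a b : a <= b -> (forall x, a <= x <= b -> continuity_pt f x) ->
  (forall x, a <= x <= b -> derivable_pt_lim F x (f x)) -> has_int f a b (F b - F a).
Proof.
  intros hab hc hd.
  exists (continuity_implies_RiemannInt hab hc).
  rewrite (RiemannInt_P20 hab (FTC_P1 hab hc)).
  assert (H1 := RiemannInt_P29 hab hc).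
  assert (H2 : antiderivative f F a b).
  { split; [|auto]. intros x hx. exists (exist _ (f x) (hd x hx)).
    symmetry; apply derive_pt_eq_0; apply hd; auto. }
  destruct (antiderivative_Ucte _ _ _ _ _ H1 H2) as [c Hc].
  rewrite (Hc b), (Hc a); [ring| lra | lra].
Qed.

Lemma zero_open_int h a b : a <= b -> (forall x, a < x < b -> h x = 0) -> Riemann_integrable h a b.
Proof.
  intros hab hz.
  assert (S : IsStepFun h a b).
  { exists (cons a (cons b nil)). exists (cons 0 nil).
    unfold adapted_couple; repeat split.
    - red; intros; simpl in H; inversion H;
      [ simpl; assumption | elim (Nat.nle_succ_0 _ H1) ].
    - simpl; unfold Rmin; destruct (Rle_dec a b); lra.
    - simpl; unfold Rmax; destruct (Rle_dec a b); lra.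
    - unfold constant_D_eq, open_interval; intros i Hi x Hx; simpl in Hi;
      destruct i; [ simpl in *; apply hz; auto | lia ]. }
  intro eps. exists (mkStepFun S). exists (mkStepFun (StepFun_P4 a b 0)).
  split.
  - intros t _. simpl. unfold fct_cte. rewrite Rminus_diag, Rabs_R0; lra.
  - rewrite StepFun_P18, Rmult_0_l, Rabs_R0. apply cond_pos.
Qed.

Lemma has_int_open f g a b v : a <= b -> (forall x, a < x < b -> f x = g x) ->
  has_int g a b v -> has_int f a b v.
Proof.
  intros hab he [pg eg].
  assert (ph : Riemann_integrable (fun x => f x - g x) a b).
  { apply zero_open_int; auto. intros x hx; rewrite he; auto; ring. }
  assert (pf : Riemann_integrable f a b).
  { refine (@Riemann_integrable_ext (fun x => g x + 1 * (f x - g x)) f a b _ _).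
    - intros; ring.
    - apply RiemannInt_P10; auto. }
  exists pf. rewrite <- eg. apply RiemannInt_P18; auto.
Qed.
Lemma cosPIm x : cos (PI - x) = - cos x.
Proof. rewrite cos_minus, cos_PI, sin_PI; ring. Qed.

Lemma cos_abs t : cos t = cos (Rabs t).
Proof. unfold Rabs; destruct (Rcase_abs t); [rewrite cos_neg|]; reflexivity. Qed.

Lemma cos_cls al t : 0 <= al <= PI/2 -> -PI <= t <= PI ->
  (Rabs t < al -> cos t > cos al) /\
  (al < Rabs t -> cos t < cos al) /\
  (Rabs t < PI - al -> cos t > - cos al) /\
  (PI - al < Rabs t -> cos t < - cos al).
Proof.
  intros Ha Ht. pose proof PI_RGT_0.
  assert (Hab : 0 <= Rabs t <= PI) by (split; [apply Rabs_pos| unfold Rabs; destruct (Rcase_abs t); lra]).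
  rewrite (cos_abs t). rewrite <- (cosPIm al).
  repeat split; intro H0.
  - apply cos_decreasing_1; lra.
  - apply cos_decreasing_1; lra.
  - apply cos_decreasing_1; lra.
  - apply cos_decreasing_1; lra.
Qed.

Lemma hint_cos a b : a <= b -> has_int cos a b (sin b - sin a).
Proof.
  intro h. apply has_int_ftc; auto.
  - intros; apply continuity_cos.
  - intros; apply derivable_pt_lim_sin.
Qed.

Lemma hint_mcos a b : a <= b -> has_int (fun t => - cos t) a b ((- sin b) - (- sin a)).
Proof.
  intro h. apply (has_int_ftc (fun t => - cos t) (fun t => - sin t)); auto.
  - intros; apply (continuity_pt_opp cos); apply continuity_cos.
  - intros; apply (derivable_pt_lim_opp sin); apply derivable_pt_lim_sin.
Qed.

Lemma hint_zero a b : a <= b -> has_int (fun _ => 0) a b (0 - 0).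
Proof.
  intro h. apply (has_int_ftc (fun _ => 0) (fun _ => 0)); auto.
  - intros; apply continuity_const; intros ? ?; reflexivity.
  - intros; apply (derivable_pt_lim_const 0).
Qed.

Definition ind (K y : R) : R :=
  (if Rle_dec K y then 1 else 0) - (if Rlt_dec y (-K) then 1 else 0).

Lemma Gk_int (Rr K : R) : 0 < K -> K <= Rr ->
  has_int (fun t => ind K (Rr * cos t) * cos t) (-PI) PI (4 * sin (acos (K/Rr))).
Proof.
  intros HK HKR. pose proof PI_RGT_0 as HPI.
  assert (HR : 0 < Rr) by lra.
  set (c := K / Rr).
  assert (Hc : 0 < c <= 1).
  { unfold c; split; [apply Rdiv_lt_0_compat; lra|].
    apply Rmult_le_reg_r with Rr; auto. unfold Rdiv; rewrite Rmult_assoc, Rinv_l; lra. }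
  assert (HKc : K = Rr * c) by (unfold c; field; lra).
  set (al := acos c).
  assert (Hcal : cos al = c) by (apply cos_acos; lra).
  assert (Hal : 0 <= al <= PI/2).
  { pose proof (acos_bound c). fold al in H. split; [lra|].
    destruct (Rle_dec al (PI/2)); auto.
    assert (cos al < 0) by (apply cos_lt_0; lra). lra. }
  assert (Hs : 0 <= sin al) by (apply sin_ge_0; lra).
  assert (HKpos : forall t, -PI <= t <= PI -> Rabs t < al -> ind K (Rr * cos t) * cos t = cos t).
  { intros t Ht H. destruct (cos_cls al t Hal Ht) as [H1 _]. specialize (H1 H).
    assert (K < Rr * cos t) by (rewrite HKc; apply Rmult_lt_compat_l; lra).
    unfold ind; destruct (Rle_dec K (Rr * cos t)); destruct (Rlt_dec (Rr * cos t) (-K)); lra. }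
  assert (HKz : forall t, -PI <= t <= PI -> al < Rabs t < PI - al -> ind K (Rr * cos t) * cos t = 0).
  { intros t Ht H. destruct (cos_cls al t Hal Ht) as [_ [H1 [H2 _]]].
    specialize (H1 (proj1 H)); specialize (H2 (proj2 H)).
    assert (Rr * cos t < K) by (rewrite HKc; apply Rmult_lt_compat_l; lra).
    assert (- K < Rr * cos t) by (rewrite HKc; nra).
    unfold ind; destruct (Rle_dec K (Rr * cos t)); destruct (Rlt_dec (Rr * cos t) (-K)); lra. }
  assert (HKn : forall t, -PI <= t <= PI -> PI - al < Rabs t -> ind K (Rr * cos t) * cos t = - cos t).
  { intros t Ht H. destruct (cos_cls al t Hal Ht) as [_ [_ [_ H1]]]. specialize (H1 H).
    assert (Rr * cos t < - K) by (rewrite HKc; nra).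
    unfold ind; destruct (Rle_dec K (Rr * cos t)); destruct (Rlt_dec (Rr * cos t) (-K)); lra. }
  assert (E : 4 * sin al = (((- sin (-PI + al)) - (- sin (-PI))) + (0 - 0)) + ((sin al - sin (-al)) + (0 - 0) + ((- sin PI) - (- sin (PI - al))))).
  { replace (-PI + al) with (- (PI - al)) by ring. rewrite !sin_neg, sin_PI_x, sin_PI. ring. }
  rewrite E.
  apply has_int_chasles with (-al).
  - apply has_int_chasles with (-PI + al).
    + apply (has_int_open _ (fun t => - cos t)); [lra| |apply hint_mcos; lra].
      intros x Hx. apply HKn; [lra|]. rewrite Rabs_left; lra.
    + apply (has_int_open _ (fun _ => 0)); [lra| |apply hint_zero; lra].
      intros x Hx. apply HKz; [lra|]. rewrite Rabs_left; lra.
  - apply has_int_chasles with (PI - al).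
    + apply has_int_chasles with al.
      * apply (has_int_open _ cos); [lra| |apply hint_cos; lra].
        intros x Hx. apply HKpos; [lra|]. unfold Rabs; destruct (Rcase_abs x); lra.
      * apply (has_int_open _ (fun _ => 0)); [lra| |apply hint_zero; lra].
        intros x Hx. apply HKz; [lra|]. rewrite Rabs_right; lra.
    + apply (has_int_open _ (fun t => - cos t)); [lra| |apply hint_mcos; lra].
      intros x Hx. apply HKn; [lra|]. rewrite Rabs_right; lra.
Qed.

Lemma hint_cos2 r : has_int (fun t => r * cos t * cos t) (-PI) PI (r * PI).
Proof.
  pose proof PI_RGT_0.
  apply (has_int_val _ _ _ ((fun t => (r/2) * (t + sin t * cos t)) PI - (fun t => (r/2) * (t + sin t * cos t)) (-PI))).
  { cbv beta. rewrite sin_neg, sin_PI. field. }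
  apply (has_int_ftc _ (fun t => (r/2) * (t + sin t * cos t))); [lra| intros; reg |].
  intros x _.
  assert (HH := derivable_pt_lim_scal (plus_fct id (mult_fct sin cos)) (r/2) x _
     (derivable_pt_lim_plus id (mult_fct sin cos) x _ _ (derivable_pt_lim_id x)
        (derivable_pt_lim_mult sin cos x _ _ (derivable_pt_lim_sin x) (derivable_pt_lim_cos x)))).
  replace (r * cos x * cos x) with (r/2 * (1 + (cos x * cos x + sin x * - sin x))).
  - exact HH.
  - assert (h := sin2_cos2 x); unfold Rsqr in h.
    assert (e : sin x * - sin x = cos x * cos x - 1) by (rewrite <- h; ring). rewrite e; field.
Qed.

Fixpoint ssum (f : nat -> R) (n : nat) : R :=
  match n with O => 0 | S m => ssum f m + f (S m) end.

Lemma hint_ssum (F : nat -> R -> R) (v : nat -> R) a b n : a <= b ->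
  (forall k, (1 <= k <= n)%nat -> has_int (F k) a b (v k)) ->
  has_int (fun t => ssum (fun k => F k t) n) a b (ssum v n).
Proof.
  intros hab. induction n as [|n IH]; intros H.
  - simpl. apply (has_int_val _ _ _ (0 - 0)); [ring|]. apply hint_zero; auto.
  - simpl. apply (has_int_ext (fun t => ssum (fun k => F k t) n + 1 * F (S n) t)).
    { intros; ring. }
    apply (has_int_val _ _ _ (ssum v n + 1 * v (S n))); [ring|].
    apply has_int_lin.
    + apply IH. intros k hk; apply H; lia.
    + apply H; lia.
Qed.

Lemma ind1 k y : (if Rle_dec (INR k - 1/2) y then 1 else 0) =
  (if Z_le_dec (Z.of_nat k) (Int_part (y + 1/2)) then 1 else 0).
Proof.
  rewrite INR_IZR_INZ. set (n := Int_part (y + 1/2)). set (m := Z.of_nat k).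
  destruct (base_Int_part (y + 1/2)) as [b1 b2]. fold n in b1, b2.
  destruct (Z_le_dec m n) as [h|h].
  - apply IZR_le in h. destruct (Rle_dec (IZR m - 1/2) y); lra.
  - assert (h' : (n + 1 <= m)%Z) by lia. apply IZR_le in h'. rewrite plus_IZR in h'.
    destruct (Rle_dec (IZR m - 1/2) y); lra.
Qed.

Lemma ind2 k y : (if Rlt_dec y (- (INR k - 1/2)) then 1 else 0) =
  (if Z_le_dec (Z.of_nat k) (- Int_part (y + 1/2)) then 1 else 0).
Proof.
  rewrite INR_IZR_INZ. set (n := Int_part (y + 1/2)). set (m := Z.of_nat k).
  destruct (base_Int_part (y + 1/2)) as [b1 b2]. fold n in b1, b2.
  destruct (Z_le_dec m (-n)) as [h|h].
  - assert (h' : (n <= - m)%Z) by lia. apply IZR_le in h'. rewrite opp_IZR in h'.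
    destruct (Rlt_dec y (- (IZR m - 1/2))); lra.
  - assert (h' : (- m + 1 <= n)%Z) by lia. apply IZR_le in h'. rewrite plus_IZR, opp_IZR in h'.
    destruct (Rlt_dec y (- (IZR m - 1/2))); lra.
Qed.

Lemma sum_Z y M : let n := Int_part (y + 1/2) in
  ssum (fun k => ind (INR k - 1/2) y) M =
  IZR (Z.min (Z.of_nat M) (Z.max n 0)) - IZR (Z.min (Z.of_nat M) (Z.max (-n) 0)).
Proof.
  intro n. induction M as [|M IH].
  - simpl ssum. replace (Z.min (Z.of_nat 0) (Z.max n 0)) with 0%Z by lia.
    replace (Z.min (Z.of_nat 0) (Z.max (-n) 0)) with 0%Z by lia. simpl; lra.
  - change (ssum (fun k => ind (INR k - 1/2) y) (S M)) with (ssum (fun k => ind (INR k - 1/2) y) M + ind (INR (S M) - 1/2) y).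
    rewrite IH. unfold ind. rewrite ind1, ind2. fold n.
    rewrite Nat2Z.inj_succ.
    destruct (Z_le_dec (Z.succ (Z.of_nat M)) n) as [h1|h1];
    destruct (Z_le_dec (Z.succ (Z.of_nat M)) (-n)) as [h2|h2].
    + lia.
    + replace (Z.min (Z.succ (Z.of_nat M)) (Z.max n 0)) with (Z.min (Z.of_nat M) (Z.max n 0) + 1)%Z by lia.
      replace (Z.min (Z.succ (Z.of_nat M)) (Z.max (-n) 0)) with (Z.min (Z.of_nat M) (Z.max (-n) 0))%Z by lia.
      rewrite plus_IZR. simpl. ring.
    + replace (Z.min (Z.succ (Z.of_nat M)) (Z.max n 0)) with (Z.min (Z.of_nat M) (Z.max n 0))%Z by lia.
      replace (Z.min (Z.succ (Z.of_nat M)) (Z.max (-n) 0)) with (Z.min (Z.of_nat M) (Z.max (-n) 0) + 1)%Z by lia.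
      rewrite plus_IZR. simpl. ring.
    + replace (Z.min (Z.succ (Z.of_nat M)) (Z.max n 0)) with (Z.min (Z.of_nat M) (Z.max n 0))%Z by lia.
      replace (Z.min (Z.succ (Z.of_nat M)) (Z.max (-n) 0)) with (Z.min (Z.of_nat M) (Z.max (-n) 0))%Z by lia.
      ring.
Qed.

Lemma round_decomp y M : (- Z.of_nat M <= Int_part (y + 1/2) <= Z.of_nat M)%Z ->
  floorR (y + 1/2) = ssum (fun k => ind (INR k - 1/2) y) M.
Proof.
  intros h. rewrite sum_Z. unfold floorR. rewrite <- minus_IZR. f_equal. lia.
Qed.

Lemma ssum_mult_r (f : nat -> R) c n : ssum (fun k => f k * c) n = ssum f n * c.
Proof. induction n; simpl; [ring| rewrite IHn; ring]. Qed.

Lemma int_formula r d : 0 < r -> 0 < d ->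
  let Rr := r / d in let N := Z.to_nat (Int_part (Rr + 1/2)) in
  has_int (integrand r d) (-PI) PI
    (r * PI + (- d) * ssum (fun k => 4 * sin (acos ((INR k - 1/2) / Rr))) N).
Proof.
  intros hr hd Rr N. pose proof PI_RGT_0.
  assert (HR : 0 < Rr) by (apply Rdiv_lt_0_compat; auto).
  set (n0 := Int_part (Rr + 1/2)).
  destruct (base_Int_part (Rr + 1/2)) as [c1 c2]. fold n0 in c1, c2.
  assert (Hn0 : (0 <= n0)%Z) by (assert (-1 < n0)%Z by (apply lt_IZR; simpl; lra); lia).
  assert (HN : Z.of_nat N = n0) by (unfold N; fold n0; apply Z2Nat.id; auto).
  assert (HNR : INR N = IZR n0) by (rewrite INR_IZR_INZ, HN; auto).
  apply (has_int_ext (fun t => r * cos t * cos t + (- d) * ssum (fun k => ind (INR k - 1/2) (Rr * cos t) * cos t) N)).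
  { intro t. unfold integrand, Dd, Qd. rewrite ssum_mult_r.
    replace (r * cos t / d) with (Rr * cos t) by (unfold Rr; field; lra).
    rewrite <- round_decomp. { ring. }
    set (y := Rr * cos t). pose proof (COS_bound t) as [cb1 cb2].
    assert (-Rr <= y <= Rr) by (unfold y; split; nra).
    destruct (base_Int_part (y + 1/2)) as [e1 e2].
    rewrite HN. split.
    - assert (- n0 - 1 < Int_part (y + 1/2))%Z; [|lia].
      apply lt_IZR. rewrite minus_IZR, opp_IZR. simpl. lra.
    - assert (Int_part (y + 1/2) < n0 + 1)%Z; [|lia].
      apply lt_IZR. rewrite plus_IZR. simpl. lra. }
  apply has_int_lin.
  - apply hint_cos2.
  - apply hint_ssum; [lra|]. intros k hk.
    apply Gk_int.
    + assert (1 <= INR k) by (apply (le_INR 1); lia). lra.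
    + assert (INR k <= INR N) by (apply le_INR; lia). lra.
Qed.
Lemma dlim_ext f g x l l' : (forall y, f y = g y) -> l = l' -> derivable_pt_lim f x l -> derivable_pt_lim g x l'.
Proof. intros H ->. replace g with f; auto. apply functional_extensionality; auto. Qed.


Section S.
Variable Rr : R.
Hypothesis HR : 0 < Rr.

Definition g x := sqrt (Rr * Rr - x * x).
Definition A x := (x * g x + Rr * Rr * (PI/2 - acos (x / Rr))) / 2.

Lemma g_sq x : -Rr <= x <= Rr -> g x * g x = Rr * Rr - x * x.
Proof. intros. unfold g. apply sqrt_sqrt. nra. Qed.

Lemma g_pos x : -Rr < x < Rr -> 0 < g x.
Proof. intros. unfold g. apply sqrt_lt_R0. nra. Qed.

Lemma g_deriv x : -Rr < x < Rr -> derivable_pt_lim g x (- x / g x).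
Proof.
  intros hx. pose proof (g_pos x hx) as gp.
  assert (H1 : derivable_pt_lim (fun y => Rr * Rr - y * y) x (0 - (1 * x + x * 1))).
  { apply (derivable_pt_lim_minus (fct_cte (Rr*Rr)) (mult_fct id id)).
    - apply derivable_pt_lim_const.
    - apply derivable_pt_lim_mult; apply derivable_pt_lim_id. }
  assert (H2 := derivable_pt_lim_comp _ sqrt x _ _ H1 (derivable_pt_lim_sqrt (Rr*Rr - x*x) ltac:(nra))).
  eapply dlim_ext; [ | | exact H2].
  - intro; reflexivity.
  - fold (g x). field. lra.
Qed.

Lemma acos_dlim u : -1 < u < 1 -> derivable_pt_lim acos u (-1 / sqrt (1 - u²)).
Proof.
  intros hu. apply (derive_pt_eq_1 _ _ _ (derivable_pt_acos u hu)). apply derive_pt_acos.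
Qed.

Lemma sqrt_1m x : -Rr < x < Rr -> sqrt (1 - (x / Rr)²) = g x / Rr.
Proof.
  intros hx. pose proof (g_pos x hx). apply sqrt_lem_1.
  - unfold Rsqr. assert (x/Rr * (x/Rr) < 1); [|lra].
    replace (x/Rr * (x/Rr)) with ((x*x) / (Rr*Rr)) by (field; lra).
    apply Rmult_lt_reg_r with (Rr*Rr); [nra|]. unfold Rdiv; rewrite Rmult_assoc, Rinv_l; nra.
  - apply Rmult_le_pos; [lra| left; apply Rinv_0_lt_compat; lra].
  - unfold Rsqr. replace (g x / Rr * (g x / Rr)) with ((g x * g x) / (Rr*Rr)) by (field; lra).
    rewrite g_sq by lra. field. lra.
Qed.

Lemma A_deriv x : -Rr < x < Rr -> derivable_pt_lim A x (g x).
Proof.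
  intros hx. pose proof (g_pos x hx) as gp.
  assert (Hu : -1 < x / Rr < 1).
  { split; [apply Rmult_lt_reg_r with Rr | apply Rmult_lt_reg_r with Rr]; auto;
    unfold Rdiv; rewrite Rmult_assoc, Rinv_l; lra. }
  assert (H1 : derivable_pt_lim (fun y => y / Rr) x (/ Rr * 1)).
  { apply (dlim_ext (mult_real_fct (/Rr) id) _ x (/Rr * 1)); [intro; unfold mult_real_fct, id, Rdiv; ring| reflexivity|].
    apply derivable_pt_lim_scal, derivable_pt_lim_id. }
  assert (H2 := derivable_pt_lim_comp _ acos x _ _ H1 (acos_dlim _ Hu)).
  assert (H3 : derivable_pt_lim (fun y => y * g y) x (1 * g x + x * (- x / g x))).
  { apply (derivable_pt_lim_mult id g). apply derivable_pt_lim_id. apply g_deriv; auto. }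
  assert (H4 : derivable_pt_lim (fun y => Rr * Rr * (PI/2 - acos (y / Rr))) x
              (Rr * Rr * (0 - (-1 / sqrt (1 - (x / Rr)²) * (/ Rr * 1))))).
  { apply (derivable_pt_lim_scal (fun y => PI/2 - acos (y/Rr))).
    apply (derivable_pt_lim_minus (fct_cte (PI/2)) (comp acos (fun y => y / Rr))).
    apply derivable_pt_lim_const. exact H2. }
  assert (H5 := derivable_pt_lim_plus _ _ x _ _ H3 H4).
  assert (H6 := derivable_pt_lim_scal _ (/2) x _ H5).
  eapply dlim_ext; [ | | exact H6].
  - intro; unfold A, mult_real_fct, plus_fct. unfold Rdiv at 3. apply Rmult_comm.
  - rewrite sqrt_1m by auto.
    transitivity ((g x * g x + Rr * Rr - x * x) / (2 * g x)); [field; split; lra|].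
    replace (g x * g x + Rr*Rr - x*x) with (2 * (g x * g x)) by (rewrite g_sq by lra; ring). field. lra.
Qed.


Lemma sqrt_ge b a : 0 <= b -> b * b <= a -> b <= sqrt a.
Proof. intros. rewrite <- (sqrt_square b) by auto. apply sqrt_le_1_alt; auto. Qed.

Lemma sqrt_le' a b : 0 <= b -> a <= b * b -> sqrt a <= b.
Proof. intros. rewrite <- (sqrt_square b) by auto. apply sqrt_le_1_alt; auto. Qed.

Lemma g_nonneg x : 0 <= g x.
Proof. apply sqrt_pos. Qed.

Lemma g_mono x y : 0 <= x <= y -> g y <= g x.
Proof. intros. unfold g. apply sqrt_le_1_alt. nra. Qed.

Lemma mono u v m d : -Rr < u -> u <= v -> v < Rr ->
  (forall x, u <= x <= v -> g x >= g m + d * (x - m)) ->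
  A v - (g m * v + d / 2 * ((v - m) * (v - m))) >= A u - (g m * u + d / 2 * ((u - m) * (u - m))).
Proof.
  intros hu huv hv H.
  destruct (Req_dec u v) as [e|ne]; [subst; lra|].
  set (P := fun x => A x - (g m * x + d / 2 * ((x - m) * (x - m)))).
  assert (HP : forall c, u <= c <= v -> derivable_pt_lim P c (g c - (g m * 1 + d / 2 * (1 * (c - m) + (c - m) * 1)))).
  { intros c hc.
    assert (H1 : derivable_pt_lim (fun x => x - m) c (1 - 0)).
    { apply (derivable_pt_lim_minus id (fct_cte m)); [apply derivable_pt_lim_id| apply derivable_pt_lim_const]. }
    assert (H2 := derivable_pt_lim_mult _ _ c _ _ H1 H1).
    assert (H3 := derivable_pt_lim_scal _ (d/2) c _ H2).
    assert (H4 := derivable_pt_lim_scal _ (g m) c _ (derivable_pt_lim_id c)).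
    assert (H5 := derivable_pt_lim_plus _ _ c _ _ H4 H3).
    assert (H6 := derivable_pt_lim_minus _ _ c _ _ (A_deriv c ltac:(lra)) H5).
    eapply dlim_ext; [| |exact H6].
    - intro; unfold P, minus_fct, plus_fct, mult_real_fct, mult_fct, id. reflexivity.
    - unfold mult_real_fct, id. ring. }
  destruct (MVT_cor2 P _ u v ltac:(lra) HP) as [c [hc1 hc2]].
  assert (hcc := H c ltac:(lra)).
  fold (P v) (P u).
  assert (0 <= (g c - (g m * 1 + d / 2 * (1 * (c - m) + (c - m) * 1))) * (v - u)).
  { apply Rmult_le_pos; lra. }
  lra.
Qed.

Definition Dg x := - x / g x.

Lemma P1 b m x : 0 <= m -> m <= x <= b -> b < Rr -> g x >= g m + Dg b * (x - m).
Proof.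
  intros hm hx hb.
  assert (gb := g_pos b ltac:(lra)). assert (gxp := g_pos x ltac:(lra)). assert (gmp := g_pos m ltac:(lra)).
  assert (e1 := g_sq x ltac:(lra)). assert (e2 := g_sq m ltac:(lra)).
  assert (m1 := g_mono x b ltac:(lra)). assert (m2 := g_mono m b ltac:(lra)).
  unfold Dg.
  assert (K : g b * (g x - g m) + b * (x - m) >= 0).
  { assert (E : (g b * (g x - g m) + b * (x - m)) * (g x + g m) = (x - m) * (b * (g x + g m) - g b * (x + m))) by nra.
    assert (0 <= (x - m) * (b * (g x + g m) - g b * (x + m))).
    { apply Rmult_le_pos; [lra|]. nra. }
    nra. }
  assert (g x - (g m + - b / g b * (x - m)) = (g b * (g x - g m) + b * (x - m)) / g b) by (field; lra).
  assert (0 <= (g b * (g x - g m) + b * (x - m)) / g b) by (apply Rmult_le_pos; [lra| left; apply Rinv_0_lt_compat; lra]).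
  lra.
Qed.

Lemma P2 a m x : 0 <= a -> a <= x <= m -> m < Rr -> g x >= g m + Dg a * (x - m).
Proof.
  intros ha hx hb.
  assert (gap := g_pos a ltac:(lra)). assert (gxp := g_pos x ltac:(lra)). assert (gmp := g_pos m ltac:(lra)).
  assert (e1 := g_sq x ltac:(lra)). assert (e2 := g_sq m ltac:(lra)).
  assert (m1 := g_mono a x ltac:(lra)). assert (m2 := g_mono a m ltac:(lra)).
  unfold Dg.
  assert (K : g a * (g x - g m) - a * (m - x) >= 0).
  { assert (E : (g a * (g x - g m) - a * (m - x)) * (g x + g m) = (m - x) * (g a * (m + x) - a * (g x + g m))) by nra.
    assert (0 <= (m - x) * (g a * (m + x) - a * (g x + g m))).
    { apply Rmult_le_pos; [lra|]. nra. }
    nra. }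
  assert (g x - (g m + - a / g a * (x - m)) = (g a * (g x - g m) - a * (m - x)) / g a) by (field; lra).
  assert (0 <= (g a * (g x - g m) - a * (m - x)) / g a) by (apply Rmult_le_pos; [lra| left; apply Rinv_0_lt_compat; lra]).
  lra.
Qed.

Lemma cell a : 0 <= a -> a + 1 < Rr -> A (a + 1) - A a >= g (a + 1/2) + (Dg (a + 1) - Dg a) / 8.
Proof.
  intros ha hb. set (m := a + 1/2).
  assert (h1 := mono m (a+1) m (Dg (a+1)) ltac:(unfold m; lra) ltac:(unfold m; lra) hb
     (fun x hx => P1 (a+1) m x ltac:(unfold m; lra) hx hb)).
  assert (h2 := mono a m m (Dg a) ltac:(lra) ltac:(unfold m; lra) ltac:(unfold m; lra)
     (fun x hx => P2 a m x ha hx ltac:(unfold m; lra))).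
  replace (a + 1 - m) with (1/2) in h1 by (unfold m; lra).
  replace (a - m) with (-(1/2)) in h2 by (unfold m; lra).
  replace (m - m) with 0 in h1, h2 by ring.
  lra.
Qed.

Lemma A0 : A 0 = 0.
Proof. unfold A. replace (0 / Rr) with 0 by (field; lra). rewrite acos_0. field. Qed.

Lemma ARr : A Rr = PI * Rr * Rr / 4.
Proof.
  unfold A, g. replace (Rr / Rr) with 1 by (field; lra). rewrite acos_1.
  replace (Rr * Rr - Rr * Rr) with 0 by ring. rewrite sqrt_0. field.
Qed.

Lemma tele M : INR M < Rr -> A (INR M) >= ssum (fun k => g (INR k - 1/2)) M + Dg (INR M) / 8.
Proof.
  induction M as [|M IH]; intro h.
  - simpl. rewrite A0. unfold Dg. replace (- 0 / g 0) with 0 by (field; apply Rgt_not_eq, g_pos; lra). lra.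
  - replace (ssum (fun k => g (INR k - 1/2)) (S M)) with (ssum (fun k => g (INR k - 1/2)) M + g (INR (S M) - 1/2)) by reflexivity.
    rewrite S_INR in *.
    assert (hM := pos_INR M).
    assert (IH' := IH ltac:(lra)).
    assert (hc := cell (INR M) hM h).
    replace (INR M + 1 - 1/2) with (INR M + 1/2) by lra.
    lra.
Qed.

Lemma A_ge_y y : 0 <= y <= Rr -> A Rr >= A y.
Proof.
  intros hy. rewrite ARr. unfold A.
  assert (hu : -1 <= y / Rr <= 1).
  { split; [apply Rmult_le_reg_r with Rr | apply Rmult_le_reg_r with Rr]; auto;
    unfold Rdiv; rewrite Rmult_assoc, Rinv_l; lra. }
  set (ph := acos (y / Rr)).
  assert (hs : sin ph = sqrt (1 - (y/Rr)²)) by (apply sin_acos; auto).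
  assert (hph : 0 <= ph) by (apply acos_bound).
  assert (hsin : sin ph <= ph) by (destruct (Req_dec ph 0) as [e|e]; [rewrite e, sin_0; lra| left; apply sin_lt_x; lra]).
  assert (hgy : g y = Rr * sqrt (1 - (y/Rr)²)).
  { unfold g. rewrite <- (sqrt_square Rr) at 3 by lra. rewrite <- sqrt_mult by (try lra; unfold Rsqr; nra).
    f_equal. unfold Rsqr. field. lra. }
  rewrite hgy, <- hs.
  assert (0 <= sin ph) by (rewrite hs; apply sqrt_pos).
  assert (y * (Rr * sin ph) <= Rr * (Rr * sin ph)) by (apply Rmult_le_compat_r; nra).
  assert (Rr * (Rr * sin ph) <= Rr * Rr * ph) by (rewrite <- Rmult_assoc; apply Rmult_le_compat_l; nra).
  lra.
Qed.

Lemma main_ineq N : 100 <= Rr -> INR N <= Rr + 1/2 -> Rr + 1/2 - INR N <= 1/1000 ->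
  PI * Rr * Rr / 4 - ssum (fun k => g (INR k - 1/2)) N >= sqrt Rr / 100.
Proof.
  intros h100 hN1 hN2.
  destruct N as [|N'].
  { simpl in hN2. lra. }
  rewrite S_INR in hN1, hN2.
  assert (hx0R : INR N' < Rr) by lra.
  set (x0 := INR N') in *. assert (hx0 : 0 <= x0) by apply pos_INR.
  set (y := Rr - 1/6).
  assert (Ht := tele N' hx0R). fold x0 in Ht.
  assert (Hy := A_ge_y y ltac:(unfold y; lra)).
  assert (Hlow : forall x, x0 <= x <= y -> g x >= g y + 0 * (x - y)).
  { intros x hx. pose proof (g_mono x y ltac:(lra)). lra. }
  assert (Hm := mono x0 y y 0 ltac:(lra) ltac:(unfold y; lra) ltac:(unfold y; lra) Hlow).
  rewrite ARr in Hy.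
  replace (ssum (fun k => g (INR k - 1/2)) (S N')) with (ssum (fun k => g (INR k - 1/2)) N' + g (INR (S N') - 1/2)) by reflexivity.
  rewrite S_INR. fold x0.
  set (s := sqrt Rr).
  assert (hs2 : s * s = Rr) by (apply sqrt_sqrt; lra).
  assert (hs0 : 0 <= s) by apply sqrt_pos.
  assert (ha : 57/100 * s <= g y).
  { unfold g. apply sqrt_ge; [lra|]. unfold y. nra. }
  assert (gx0 := g_pos x0 ltac:(lra)).
  assert (hb : x0 <= 101/100 * s * g x0).
  { assert (ex := g_sq x0 ltac:(lra)).
    assert (0 <= 101/100 * s * g x0) by (apply Rmult_le_pos; [lra|lra]).
    assert (x0 * x0 <= (101/100 * s * g x0) * (101/100 * s * g x0)).
    { replace ((101/100 * s * g x0) * (101/100 * s * g x0)) with (10201/10000 * (s*s) * (g x0 * g x0)) by field.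
      rewrite hs2, ex.
      assert (q1 : Rr * Rr - x0 * x0 >= Rr - 2505/10000).
      { replace (Rr * Rr - x0 * x0) with ((Rr - x0) * (Rr + x0)) by ring. nra. }
      assert (q2 : x0 * x0 <= Rr * Rr) by nra.
      assert (q3 : Rr * Rr <= 10201/10000 * Rr * (Rr - 2505/10000)) by nra.
      assert (q4 : 10201/10000 * Rr * (Rr - 2505/10000) <= 10201/10000 * Rr * (Rr * Rr - x0 * x0)).
      { apply Rmult_le_compat_l; lra. }
      lra. }
    nra. }
  assert (hb' : Dg x0 >= - (101/100) * s).
  { unfold Dg. assert (x0 / g x0 <= 101/100 * s).
    { apply Rmult_le_reg_r with (g x0); auto. unfold Rdiv; rewrite Rmult_assoc, Rinv_l; lra. }
    unfold Rdiv in *. lra. }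
  assert (hc : g (x0 + 1 - 1/2) <= 448/10000 * s).
  { unfold g. apply sqrt_le'; [lra|].
    replace (448/10000 * s * (448/10000 * s)) with (200704/100000000 * (s * s)) by field.
    rewrite hs2. nra. }
  assert (hgy : 0 <= g y) by apply g_nonneg.
  assert (g y * (y - x0) >= 57/100 * s * (1/3)).
  { assert (hyx : y - x0 >= 1/3) by (unfold y; lra).
    assert (0 <= (g y - 57/100 * s) * (y - x0)) by (apply Rmult_le_pos; lra).
    assert (0 <= 57/100 * s * (y - x0 - 1/3)) by (apply Rmult_le_pos; lra).
    nra. }
  replace (y - y) with 0 in Hm by ring.
  lra.
Qed.

Lemma g_eq K : 0 <= K <= Rr -> Rr * sqrt (1 - (K / Rr)²) = g K.
Proof.
  intros hy. unfold g. rewrite <- (sqrt_square Rr) at 1 by lra.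
  assert (h1 : 0 <= Rr * Rr) by nra.
  assert (h2 : 0 <= 1 - (K / Rr)²).
  { unfold Rsqr. assert (K / Rr * (K / Rr) <= 1); [|lra].
    replace (K / Rr * (K / Rr)) with ((K*K) / (Rr*Rr)) by (field; lra).
    apply Rmult_le_reg_r with (Rr*Rr); [nra|]. unfold Rdiv; rewrite Rmult_assoc, Rinv_l; nra. }
  rewrite <- sqrt_mult by auto.
  f_equal. unfold Rsqr. field. lra.
Qed.

End S.

Lemma ssum_ext_le (f h : nat -> R) n : (forall k, (1 <= k <= n)%nat -> f k = h k) -> ssum f n = ssum h n.
Proof. induction n; intros H; simpl; auto. rewrite IHn, H; [reflexivity| lia |]. intros; apply H; lia. Qed.

Lemma ssum_mult_l (f : nat -> R) c n : ssum (fun k => c * f k) n = c * ssum f n.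
Proof. induction n; simpl; [ring| rewrite IHn; ring]. Qed.

Theorem lemma5p1 :
  exists eps0 C1 : R, 0 < eps0 /\ 0 < C1 /\
  exists R0 : R,
    forall r delta : R, 0 < r -> 0 < delta ->
      let Rr := r / delta in
      let eps := Rr + 1/2 - floorR (Rr + 1/2) in
      0 <= eps <= eps0 -> R0 <= Rr ->
      exists pr : Riemann_integrable (integrand r delta) (- PI) PI,
        RiemannInt pr >= C1 * Rpower delta (3/2) / sqrt r.
Proof.
  exists (1/1000), (1/25). split; [lra|]. split; [lra|]. exists 100.
  intros r d hr hd Rr eps heps hR.
  assert (HR : 0 < Rr) by (unfold Rr; apply Rdiv_lt_0_compat; auto).
  destruct (int_formula r d hr hd) as [pr epr]. exists pr. rewrite epr. clear epr pr.
  fold Rr.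
  set (n0 := Int_part (Rr + 1/2)) in *.
  set (N := Z.to_nat n0).
  destruct (base_Int_part (Rr + 1/2)) as [c1 c2]. fold n0 in c1, c2.
  assert (Hn0 : (0 <= n0)%Z) by (assert (-1 < n0)%Z by (apply lt_IZR; simpl; lra); lia).
  assert (HNR : INR N = IZR n0) by (unfold N; rewrite INR_IZR_INZ, Z2Nat.id; auto).
  assert (heps' : Rr + 1/2 - INR N <= 1/1000).
  { rewrite HNR. unfold eps, floorR in heps. fold n0 in heps. lra. }
  assert (Hmain := main_ineq Rr HR N hR ltac:(lra) heps').
  rewrite (ssum_ext_le _ (fun k => (4 / Rr) * g Rr (INR k - 1/2))).
  2:{ intros k hk.
      assert (1 <= INR k) by (apply (le_INR 1); lia).
      assert (INR k <= INR N) by (apply le_INR; lia).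
      rewrite sin_acos.
      2:{ split.
          - apply Rle_trans with 0; [lra|]. apply Rmult_le_pos; [lra| left; apply Rinv_0_lt_compat; lra].
          - apply Rmult_le_reg_r with Rr; auto. unfold Rdiv; rewrite Rmult_assoc, Rinv_l; lra. }
      rewrite <- (g_eq Rr HR (INR k - 1/2)) by lra. field. lra. }
  rewrite ssum_mult_l.
  set (S := ssum (fun k => g Rr (INR k - 1/2)) N) in *.
  set (s := sqrt Rr) in *.
  assert (hs2 : s * s = Rr) by (apply sqrt_sqrt; lra).
  assert (hs0 : 0 < s) by (apply sqrt_lt_R0; lra).
  assert (Hr : r = Rr * d) by (unfold Rr; field; lra).
  assert (Hp : Rpower d (3/2) = d * sqrt d).
  { replace (3/2) with (1 + /2) by field. rewrite Rpower_plus, Rpower_1, Rpower_sqrt; auto. }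
  rewrite Hp. rewrite Hr, sqrt_mult by lra. fold s.
  assert (hsd : 0 < sqrt d) by (apply sqrt_lt_R0; lra).
  replace (1 / 25 * (d * sqrt d) / (s * sqrt d)) with (d / (25 * s)) by (field; lra).
  replace (Rr * d * PI + - d * (4 / Rr * S)) with (4 * d / Rr * (PI * Rr * Rr / 4 - S)) by (field; lra).
  apply Rle_ge.
  apply Rle_trans with (4 * d / Rr * (s / 100)).
  - right. rewrite <- hs2. field. lra.
  - apply Rmult_le_compat_l; [| lra].
    apply Rmult_le_pos; [lra | left; apply Rinv_0_lt_compat; lra].
Qed.
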